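(* For an integer $k\ge0$ and real $\alpha>k$, $$\sum_{n=1}^\infty\frac{H_{n+\alpha}}{(n+k)(n+\alpha)}=\frac{H_{\alpha-k}^2+H_{\alpha-k}^{(2)}}{\alpha-k}-\sum_{j=1}^k\frac{H_{\alpha+j-k}}{j(\alpha+j-k)}.$$
   Context: Shifted harmonic numbers: for a real $\alpha$ that is not a negative integer, $H_\alpha := \sum_{k=1}^\infty\left(\frac1k-\frac1{k+\alpha}\right)$ and, for integers $m\ge 2$, $H_\alpha^{(m)} := \sum_{k=1}^\infty\left(\frac1{k^m}-\frac1{(k+\alpha)^m}\right)=\zeta(m)-\zeta(m,\alpha+1)$, where $\zeta$ is the Riemann zeta function and $\zeta(s,\alpha+1)=\sum_{n=1}^\infty (n+\alpha)^{-s}$ is the Hurwitz zeta function. Powers such as $H_\alpha^2$ mean $(H_\alpha)^2$. Empty sums are $0$. *)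

(* Defs.v *)
From Stdlib Require Import Reals ClassicalEpsilon.
Open Scope R_scope.

(* Shifted harmonic number H_a = sum_{k>=1} (1/k - 1/(k+a)).
   Defined as the (chosen) limit of the convergent series; the series
   index i starts at 0 and stands for k = i+1. *)
Definition Hsh (a : R) : R :=
  epsilon (inhabits 0%R)
    (fun l => infinite_sum (fun i => / INR (i + 1) - / (INR (i + 1) + a)) l).

Definition Hshm (m : nat) (a : R) : R :=
  epsilon (inhabits 0%R)
    (fun l => infinite_sum (fun i => / (INR (i + 1)) ^ m - / (INR (i + 1) + a) ^ m) l).

Fixpoint sum1 (f : nat -> R) (k : nat) : R :=
  match k with
  | O => 0
  | S k' => sum1 f k' + f (S k')
  end.

(* Main.v *)
Require Import Defs.
From Stdlib Require Import Reals Lra Lia Psatz ClassicalEpsilon.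
From Coquelicot Require Import Coquelicot.
Open Scope R_scope.

Lemma INR_S1 i : INR (i+1) = INR i + 1.
Proof. rewrite plus_INR; simpl; ring. Qed.

Lemma INR_SS i : INR (S i + 1) = INR (i+1) + 1.
Proof. rewrite !plus_INR, S_INR; simpl; ring. Qed.

Lemma INR_pos1 i : 1 <= INR (i+1).
Proof. rewrite INR_S1; generalize (pos_INR i); lra. Qed.

Lemma div_le a b c d : 0 < b -> 0 < d -> a * d <= c * b -> a / b <= c / d.
Proof.
  intros hb hd H. unfold Rdiv. apply Rmult_le_reg_r with (b*d); [nra|].
  replace (a*/b*(b*d)) with (a*d) by (field; lra).
  replace (c*/d*(b*d)) with (c*b) by (field; lra). exact H.
Qed.

Lemma lim_inv_shift (c : R) : 0 < c -> is_lim_seq (fun n => / (INR n + c)) 0.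
Proof.
  intros hc.
  assert (H : is_lim_seq (fun n => INR n + c) p_infty).
  { eapply is_lim_seq_plus. apply is_lim_seq_INR. apply is_lim_seq_const. reflexivity. }
  apply (is_lim_seq_inv _ _ H). discriminate.
Qed.

Lemma lim_c_inv (c d : R) : 0 <= d -> is_lim_seq (fun i => c * / (INR (i+1) + d)) 0.
Proof.
  intros hd.
  assert (H := is_lim_seq_scal_l _ c _ (lim_inv_shift (1+d) ltac:(lra))).
  simpl in H. rewrite Rmult_0_r in H.
  eapply is_lim_seq_ext; [|exact H]. intros n. simpl. rewrite INR_S1. f_equal. f_equal. ring.
Qed.

Lemma sum_telesc (f : nat -> R) n : sum_n (fun i => f i - f (S i)) n = f 0%nat - f (S n).
Proof. induction n. rewrite sum_O; reflexivity. rewrite sum_Sn, IHn. unfold plus; simpl. cbv [Rminus]. ring_simplify. reflexivity. Qed.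

Lemma is_series_telesc (f : nat -> R) (l : R) :
  is_lim_seq f l -> is_series (fun i => f i - f (S i)) (f 0%nat - l).
Proof.
  intros H. change (is_lim_seq (sum_n (fun i => f i - f (S i))) (f 0%nat - l)).
  apply (is_lim_seq_ext (fun n => f 0%nat - f (S n))). intros; symmetry; apply sum_telesc.
  apply is_lim_seq_minus'. apply is_lim_seq_const. apply is_lim_seq_incr_1 in H. exact H.
Qed.

Lemma normR x : norm x = Rabs x.
Proof. reflexivity. Qed.

Lemma bnd1 (z y : R) : 1 <= z -> 0 <= y -> 0 <= /z - /(z+y) <= 2*y*(/z - /(z+1)).
Proof.
  intros hz hy.
  replace (/z - /(z+y)) with (y/(z*(z+y))) by (field; lra).
  replace (2*y*(/z - /(z+1))) with ((2*y)/(z*(z+1))) by (field; lra).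
  split.
  - unfold Rdiv; apply Rmult_le_pos; [lra| left; apply Rinv_0_lt_compat; nra].
  - apply div_le. nra. nra. assert (0 <= y*z*(z+2*y-1)) by (apply Rmult_le_pos; [apply Rmult_le_pos|]; lra). nra.
Qed.

Definition h (y : R) (i : nat) := / INR (i + 1) - / (INR (i + 1) + y).

Lemma telesc_inv (c : R) : 0 <= c ->
  is_series (fun i => c * (/ INR (i+1) - / INR (S i + 1))) c.
Proof.
  intros hc.
  assert (H := is_series_telesc (fun i => c * / (INR (i+1) + 0)) 0 (lim_c_inv c 0 (Rle_refl 0))).
  simpl in H. replace (c * / (1 + 0) - 0) with c in H by (field).
  eapply is_series_ext; [|exact H]. intros n. simpl. rewrite !Rplus_0_r. ring.
Qed.

Lemma ex_h (y : R) : 0 <= y -> ex_series (h y).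
Proof.
  intros hy. apply (@ex_series_le R_AbsRing R_CompleteNormedModule _ (fun i => 2*y*(/INR (i+1) - / INR (S i + 1)))).
  - intros n. rewrite normR. unfold h. rewrite INR_SS.
    destruct (bnd1 (INR (n+1)) y (INR_pos1 n) hy) as [A B].
    rewrite Rabs_pos_eq; lra.
  - eexists. apply telesc_inv. lra.
Qed.

Lemma Hsh_is (y : R) : 0 <= y -> is_series (h y) (Hsh y).
Proof.
  intros hy. destruct (ex_h y hy) as [l Hl].
  unfold Hsh.
  apply is_series_Reals.
  apply (epsilon_spec (inhabits 0) (fun l => infinite_sum (fun i => / INR (i + 1) - / (INR (i + 1) + y)) l)).
  exists l. apply is_series_Reals. exact Hl.
Qed.

Lemma sumn_le (a b : nat -> R) : (forall n, a n <= b n) -> forall N, sum_n a N <= sum_n b N.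
Proof.
  intros H N. induction N. rewrite !sum_O; apply H.
  rewrite !sum_Sn. unfold plus; simpl. generalize (H (S N)); lra.
Qed.

Lemma is_series_le (a b : nat -> R) la lb : (forall n, a n <= b n) ->
  is_series a la -> is_series b lb -> la <= lb.
Proof.
  intros H Ha Hb. assert (Ha' : is_lim_seq (sum_n a) la) by exact Ha.
  assert (Hb' : is_lim_seq (sum_n b) lb) by exact Hb.
  assert (X := is_lim_seq_le _ _ _ _ (sumn_le a b H) Ha' Hb'). simpl in X. exact X.
Qed.

Lemma is_series_zero : is_series (fun _ => 0) 0.
Proof.
  change (is_lim_seq (sum_n (fun _ => 0)) 0).
  apply (is_lim_seq_ext (fun _ => 0)); [|apply is_lim_seq_const].
  intros n; induction n. rewrite sum_O; reflexivity.
  rewrite sum_Sn, <- IHn. unfold plus; simpl. symmetry. apply Rplus_0_r.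
Qed.

Lemma is_series_nonneg (a : nat -> R) l : (forall n, 0 <= a n) -> is_series a l -> 0 <= l.
Proof.
  intros H Ha. apply (is_series_le (fun _ => 0) a); auto. apply is_series_zero.
Qed.

Lemma Hsh_0 : Hsh 0 = 0.
Proof.
  assert (H := Hsh_is 0 (Rle_refl 0)).
  apply (is_series_unique (h 0)) in H.
  rewrite <- H. apply is_series_unique.
  eapply is_series_ext; [|exact is_series_zero].
  intros; unfold h; simpl. rewrite Rplus_0_r. ring.
Qed.

Lemma Hsh_succ (y : R) : 0 <= y -> Hsh (y+1) = Hsh y + / (y+1).
Proof.
  intros hy.
  assert (H := is_series_minus _ _ _ _ (Hsh_is (y+1) ltac:(lra)) (Hsh_is y hy)).
  assert (E := is_series_telesc (fun i => 1 * / (INR (i+1) + y)) 0 (lim_c_inv 1 y hy)).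
  assert (U1 := is_series_unique _ _ H).
  assert (U2 : Series (fun n => plus (h (y+1) n) (opp (h y n))) = 1 * / (INR (0+1) + y) - 0).
  { apply is_series_unique.
    eapply is_series_ext; [|exact E]. intros n. cbv beta. rewrite INR_SS. unfold h, plus, opp; simpl.
    field. generalize (INR_pos1 n); split; lra. }
  unfold plus, opp in U1, U2; simpl in U1, U2. rewrite U1 in U2.
  replace (INR 1) with 1 in U2 by reflexivity. rewrite (Rplus_comm 1 y) in U2. lra.
Qed.

Lemma Hsh_nat_succ n : Hsh (INR (S n)) = Hsh (INR n) + / (INR n + 1).
Proof. rewrite S_INR. apply Hsh_succ, pos_INR. Qed.

Lemma Hsh_ge0 y : 0 <= y -> 0 <= Hsh y.
Proof.
  intros hy. apply (is_series_nonneg (h y)); [|apply Hsh_is; auto].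
  intros n; unfold h. destruct (bnd1 (INR (n+1)) y (INR_pos1 n) hy); lra.
Qed.

Lemma Hsh_nat_bound n : Hsh (INR n) <= 2 * sqrt (INR n).
Proof.
  induction n.
  - simpl. rewrite Hsh_0, sqrt_0. lra.
  - rewrite Hsh_nat_succ.
    assert (s := sqrt_pos (INR n)). assert (t := sqrt_pos (INR (S n))).
    assert (ss := sqrt_sqrt (INR n) (pos_INR n)).
    assert (tt := sqrt_sqrt (INR (S n)) (pos_INR (S n))).
    rewrite S_INR in *. assert (hn := pos_INR n).
    assert (t1 : 1 <= sqrt (INR n + 1)).
    { rewrite <- sqrt_1 at 1. apply sqrt_le_1_alt. lra. }
    assert (st : sqrt (INR n) <= sqrt (INR n + 1)) by (apply sqrt_le_1_alt; lra).
    assert (K : / (INR n + 1) <= 2 * (sqrt (INR n + 1) - sqrt (INR n))).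
    { apply (Rmult_le_reg_r (INR n + 1)); [lra|].
      rewrite Rinv_l by lra.
      assert ((sqrt (INR n + 1) - sqrt (INR n)) * (sqrt (INR n + 1) + sqrt (INR n)) = 1) by nra.
      nra. }
    lra.
Qed.

Lemma shift_series (p x : R) : 0 <= p -> 0 <= x ->
  is_series (fun j => / (INR (j+1) + p) - / (INR (j+1) + p + x)) (Hsh (p+x) - Hsh p).
Proof.
  intros hp hx.
  assert (H := is_series_minus _ _ _ _ (Hsh_is (p+x) ltac:(lra)) (Hsh_is p hp)).
  eapply is_series_ext; [|exact H]. intros n. unfold h, plus, opp; simpl.
  rewrite Rplus_assoc. ring.
Qed.

Lemma D_bound (z x : R) : 1 <= z -> 0 <= x -> 0 <= Hsh (z+x) - Hsh z <= x / z.
Proof.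
  intros hz hx. assert (H := shift_series z x ltac:(lra) hx). split.
  - eapply is_series_nonneg; [|exact H]. intros n. cbv beta.
    destruct (bnd1 (INR (n+1) + z) x ltac:(generalize (INR_pos1 n); lra) hx); lra.
  - assert (E := is_series_telesc (fun i => x * / (INR (i+1) + (z-1))) 0 (lim_c_inv x (z-1) ltac:(lra))).
    replace (x / z) with (x * / (INR (0+1) + (z-1)) - 0) by (simpl; field; lra).
    eapply is_series_le; [|exact H|exact E]. intros n. cbv beta.
    rewrite INR_SS. assert (w := INR_pos1 n).
    set (w0 := INR (n+1) + (z-1)).
    replace (INR (n+1) + z) with (w0 + 1) by (unfold w0; ring).
    replace (INR (n + 1) + 1 + (z - 1)) with (w0 + 1) by (unfold w0; ring).
    assert (1 <= w0) by (unfold w0; lra).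
    replace (/ (w0 + 1) - / (w0 + 1 + x)) with (x / ((w0+1)*(w0+1+x))) by (field; lra).
    replace (x * / w0 - x * / (w0 + 1)) with (x / (w0*(w0+1))) by (field; lra).
    apply div_le; try nra.
Qed.

Lemma sumn_mono (a : nat -> R) : (forall n, 0 <= a n) -> forall N M, sum_n a N <= sum_n a (M + N).
Proof.
  intros H N M. induction M. simpl; lra.
  replace (S M + N)%nat with (S (M + N)) by lia. rewrite sum_Sn. unfold plus; simpl.
  generalize (H (S (M+N))); lra.
Qed.

Lemma series_partial_le (a : nat -> R) l : (forall n, 0 <= a n) -> is_series a l ->
  forall N, sum_n a N <= l.
Proof.
  intros H Ha N.
  assert (Ha' : is_lim_seq (sum_n a) l) by exact Ha.
  apply (is_lim_seq_incr_n _ N) in Ha'.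
  assert (X := is_lim_seq_le _ _ _ _ (fun M => sumn_mono a H N M) (is_lim_seq_const _) Ha').
  simpl in X. exact X.
Qed.

Lemma lim_sum_n (u : nat -> nat -> R) (l : nat -> R) :
  (forall i, is_lim_seq (fun K => u i K) (l i)) ->
  forall M, is_lim_seq (fun K => sum_n (fun i => u i K) M) (sum_n l M).
Proof.
  intros H M. induction M.
  - rewrite sum_O. eapply is_lim_seq_ext; [|apply (H 0%nat)]. intros; rewrite sum_O; reflexivity.
  - rewrite sum_Sn. eapply is_lim_seq_ext; [|apply (is_lim_seq_plus' _ _ _ _ IHM (H (S M)))].
    intros K. rewrite sum_Sn. reflexivity.
Qed.

Lemma fub_bound (a : nat -> nat -> R) (c r : nat -> R) R0 :
  (forall i j, 0 <= a i j) -> (forall i, is_series (a i) (c i)) ->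
  (forall j, is_series (fun i => a i j) (r j)) -> is_series r R0 ->
  forall M, sum_n c M <= R0.
Proof.
  intros Ha Hc Hr HR M.
  assert (Lc := lim_sum_n (fun i K => sum_n (a i) K) c (fun i => Hc i) M).
  assert (rpos : forall j, 0 <= r j).
  { intros j. eapply is_series_nonneg; [|exact (Hr j)]. intros; apply Ha. }
  assert (Bd : forall K, sum_n (fun i => sum_n (a i) K) M <= R0).
  { intros K. rewrite sum_n_switch.
    apply Rle_trans with (sum_n r K).
    - apply sumn_le. intros j. apply (series_partial_le (fun i => a i j)); auto.
    - apply series_partial_le; auto. }
  assert (X := is_lim_seq_le _ _ _ _ Bd Lc (is_lim_seq_const R0)). simpl in X. exact X.
Qed.

Lemma fubini (a : nat -> nat -> R) (c r : nat -> R) R0 :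
  (forall i j, 0 <= a i j) -> (forall i, is_series (a i) (c i)) ->
  (forall j, is_series (fun i => a i j) (r j)) -> is_series r R0 ->
  is_series c R0.
Proof.
  intros Ha Hc Hr HR.
  assert (cpos : forall i, 0 <= c i).
  { intros i. eapply is_series_nonneg; [|exact (Hc i)]. intros; apply Ha. }
  assert (Bd := fub_bound a c r R0 Ha Hc Hr HR).
  destruct (growing_cv (sum_n c)) as [C HC].
  { intros n. rewrite sum_Sn. unfold plus; simpl. generalize (cpos (S n)); lra. }
  { exists R0. intros x [i ->]. apply Bd. }
  apply is_lim_seq_Reals in HC.
  assert (HCs : is_series c C) by exact HC.
  assert (L1 : C <= R0).
  { assert (X := is_lim_seq_le _ _ _ _ Bd HC (is_lim_seq_const R0)). exact X. }
  assert (L2 : R0 <= C).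
  { assert (Bd2 := fub_bound (fun j i => a i j) r c C (fun j i => Ha i j) Hr Hc HCs).
    assert (HR' : is_lim_seq (sum_n r) R0) by exact HR.
    assert (X := is_lim_seq_le _ _ _ _ Bd2 HR' (is_lim_seq_const C)). exact X. }
  replace R0 with C by lra. exact HCs.
Qed.

Lemma lin2 (a b : nat -> R) la lb (al be : R) : is_series a la -> is_series b lb ->
  is_series (fun n => al * a n + be * b n) (al * la + be * lb).
Proof.
  intros Ha Hb.
  assert (X := is_series_plus _ _ _ _ (is_series_scal_l al _ _ Ha) (is_series_scal_l be _ _ Hb)).
  exact X.
Qed.

Lemma scal1 (a : nat -> R) la (al : R) : is_series a la ->
  is_series (fun n => al * a n) (al * la).
Proof. intros Ha. exact (is_series_scal_l al _ _ Ha). Qed.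

Lemma ext_R (a b : nat -> R) (l : R) : (forall n, a n = b n) -> is_series a l -> is_series b l.
Proof. intros H Ha. exact (is_series_ext a b l H Ha). Qed.

Section Main.
Variable x : R.
Hypothesis hx : 0 < x.

Definition Bm (i j : nat) := / (INR (i+1) * (INR (i+1) + INR (j+1)) * (INR (i+1) + INR (j+1) + x)).
Definition cm (i : nat) := (Hsh (INR (i+1) + x) - Hsh (INR (i+1))) / (INR (i+1) * x).
Definition rm (j : nat) := (Hsh (INR (j+1)) / INR (j+1) - Hsh (INR (j+1) + x) / (INR (j+1) + x)) / x.

Lemma Bm_pos i j : 0 <= Bm i j.
Proof.
  unfold Bm. generalize (INR_pos1 i) (INR_pos1 j); intros.
  left; apply Rinv_0_lt_compat. apply Rmult_lt_0_compat; [apply Rmult_lt_0_compat|]; lra.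
Qed.

Lemma row_series i : is_series (Bm i) (cm i).
Proof.
  set (p := INR (i+1)). assert (hp : 1 <= p) by apply INR_pos1.
  assert (H := scal1 _ _ (/ (p * x)) (shift_series p x ltac:(lra) ltac:(lra))).
  unfold cm. fold p. replace ((Hsh (p + x) - Hsh p) / (p * x)) with (/ (p * x) * (Hsh (p + x) - Hsh p)) by (field; lra).
  eapply ext_R; [|exact H]. intros j. cbv beta. unfold Bm. fold p.
  assert (hq := INR_pos1 j). field. repeat split; lra.
Qed.

Lemma col_series j : is_series (fun i => Bm i j) (rm j).
Proof.
  set (q := INR (j+1)). assert (hq : 1 <= q) by apply INR_pos1.
  assert (H := lin2 _ _ _ _ (/q * (/(q+x) - /x)) (/q * /x) (Hsh_is (q+x) ltac:(lra)) (Hsh_is q ltac:(lra))).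
  unfold rm. fold q.
  replace ((Hsh q / q - Hsh (q + x) / (q + x)) / x) with
    (/q * (/(q+x) - /x) * Hsh (q + x) + /q * /x * Hsh q) by (field; lra).
  eapply ext_R; [|exact H]. intros i. cbv beta. unfold Bm, h. fold q.
  assert (hp := INR_pos1 i). field. repeat split; lra.
Qed.

Definition wm (i : nat) := / (INR (i + 1)) ^ 2 - / (INR (i + 1) + x) ^ 2.

Lemma Hshm_is : is_series wm (Hshm 2 x).
Proof.
  assert (ex : ex_series wm).
  { apply (@ex_series_le R_AbsRing R_CompleteNormedModule _ (fun i => 2*(/INR (i+1) - / INR (S i + 1)))).
    - intros n. rewrite normR. unfold wm. rewrite INR_SS.
      set (z := INR (n+1)). assert (hz : 1 <= z) by apply INR_pos1.
      replace (/ z ^ 2 - / (z + x) ^ 2) with (x * (2*z+x) / (z^2 * (z+x)^2)) by (field; lra).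
      replace (2 * (/ z - / (z + 1))) with (2 / (z * (z+1))) by (field; lra).
      assert (0 <= x * (2*z+x) / (z^2 * (z+x)^2)).
      { unfold Rdiv. apply Rmult_le_pos. nra. left; apply Rinv_0_lt_compat. apply Rmult_lt_0_compat; apply pow_lt; lra. }
      rewrite Rabs_pos_eq by lra.
      apply Rle_trans with (/ z ^ 2).
      + replace (x * (2 * z + x) / (z ^ 2 * (z + x) ^ 2)) with (/ z ^2 - / (z+x)^2) by (field; lra).
        assert (0 < / (z+x)^2) by (apply Rinv_0_lt_compat; apply pow_lt; lra). lra.
      + replace (/ z ^ 2) with (1 / (z^2)) by (field; lra). apply div_le; nra.
    - eexists. apply telesc_inv. lra. }
  destruct ex as [l Hl].
  unfold Hshm. apply is_series_Reals.
  apply (epsilon_spec (inhabits 0) (fun l => infinite_sum (fun i => / (INR (i + 1)) ^ 2 - / (INR (i + 1) + x) ^ 2) l)).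
  exists l. apply is_series_Reals. exact Hl.
Qed.

Lemma r_step (z : R) : 0 <= z ->
  2 * x * ((Hsh (z+1) / (z+1) - Hsh (z+1+x) / (z+1+x)) / x) =
  (Hsh (z+1) ^ 2 - Hsh z ^ 2) - (Hsh (z+1+x) ^ 2 - Hsh (z+x) ^ 2) + (/ (z+1) ^ 2 - / (z+1+x) ^ 2).
Proof.
  intros hz. rewrite (Hsh_succ z hz).
  replace (z+1+x) with ((z+x)+1) by ring. rewrite (Hsh_succ (z+x)) by lra.
  field. lra.
Qed.

Lemma r_partial M :
  2 * x * sum_n rm M = Hsh (INR (M+1)) ^ 2 - Hsh (INR (M+1) + x) ^ 2 + Hsh x ^ 2 + sum_n wm M.
Proof.
  induction M.
  - rewrite !sum_O. unfold rm, wm. simpl (INR (0+1)).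
    assert (E := r_step 0 (Rle_refl 0)). rewrite Hsh_0 in E.
    replace (0+1) with 1 in E by ring. replace (0+x) with x in E by ring.
    rewrite E. ring.
  - rewrite !sum_Sn. rewrite !INR_SS. unfold plus; simpl.
    rewrite Rmult_plus_distr_l, IHM. unfold rm, wm. rewrite !INR_SS.
    rewrite r_step by (generalize (INR_pos1 M); lra). ring.
Qed.

Lemma lim_isqrt : is_lim_seq (fun M => / sqrt (INR (M+1))) 0.
Proof.
  assert (H := is_lim_seq_continuous sqrt _ 0 (continuity_pt_sqrt 0 (Rle_refl 0)) (lim_inv_shift 1 ltac:(lra))).
  rewrite sqrt_0 in H. eapply is_lim_seq_ext; [|exact H]. intros n. cbv beta.
  rewrite sqrt_inv, INR_S1. reflexivity.
Qed.

Lemma boundary_lim : is_lim_seq (fun M => Hsh (INR (M+1)) ^ 2 - Hsh (INR (M+1) + x) ^ 2) 0.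
Proof.
  set (v := fun M => 4 * x * / sqrt (INR (M+1)) + x * x * / (INR (M+1) + 0)).
  assert (Hv : is_lim_seq v 0).
  { replace (Finite 0) with (Finite (4*x*0 + 0)) by (f_equal; ring).
    apply is_lim_seq_plus'.
    - apply (is_lim_seq_scal_l _ (4*x) _ lim_isqrt).
    - apply lim_c_inv; lra. }
  assert (Hv' : is_lim_seq (fun M => - v M) 0).
  { replace (Finite 0) with (Finite (- 0)) by (f_equal; ring). apply is_lim_seq_opp in Hv. exact Hv. }
  apply (is_lim_seq_le_le (fun M => - v M) _ v); auto.
  intros M. unfold v. set (z := INR (M+1)). assert (hz : 1 <= z) by apply INR_pos1.
  destruct (D_bound z x hz ltac:(lra)) as [d0 d1].
  assert (H0 := Hsh_ge0 z ltac:(lra)).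
  assert (Hb : Hsh z <= 2 * sqrt z) by (unfold z; apply Hsh_nat_bound).
  set (s := sqrt z). fold s in Hb.
  assert (hs : 1 <= s) by (unfold s; rewrite <- sqrt_1; apply sqrt_le_1_alt; lra).
  assert (zs : z = s * s) by (unfold s; rewrite sqrt_sqrt; lra).
  set (d := Hsh (z + x) - Hsh z) in *.
  replace (Hsh (z + x)) with (Hsh z + d) by (unfold d; ring).
  assert (K : d * (2 * Hsh z + d) <= x / z * (4 * s + x / z)).
  { apply Rmult_le_compat; nra. }
  assert (K2 : x / z * (4 * s + x / z) <= 4 * x * / s + x * x * / (z + 0)).
  { rewrite zs. replace (x / (s * s) * (4 * s + x / (s * s))) with (4 * x * / s + (x*x) / (s*s) * / (s*s)) by (field; lra).
    rewrite Rplus_0_r.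
    assert (0 < / (s*s)) by (apply Rinv_0_lt_compat; nra).
    assert (/ (s*s) <= 1) by (rewrite <- Rinv_1; apply Rinv_le_contravar; nra).
    assert (0 <= x*x / (s*s)) by (unfold Rdiv; apply Rmult_le_pos; nra).
    assert (x * x / (s * s) * / (s * s) <= x * x / (s*s)) by nra.
    unfold Rdiv in *. lra. }
  assert (0 <= 4 * x * / s + x * x * / (z + 0)).
  { assert (0 < / s) by (apply Rinv_0_lt_compat; lra). assert (0 < / (z+0)) by (apply Rinv_0_lt_compat; lra). nra. }
  split; nra.
Qed.

Lemma r_series : is_series rm ((Hsh x ^ 2 + Hshm 2 x) / (2 * x)).
Proof.
  change (is_lim_seq (sum_n rm) ((Hsh x ^ 2 + Hshm 2 x) / (2 * x))).
  apply (is_lim_seq_ext (fun M => / (2 * x) * ((Hsh (INR (M+1)) ^ 2 - Hsh (INR (M+1) + x) ^ 2) + Hsh x ^ 2 + sum_n wm M))).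
  { intros M. assert (E := r_partial M). apply (Rmult_eq_reg_l (2*x)); [|lra]. rewrite E. field. lra. }
  replace ((Hsh x ^ 2 + Hshm 2 x) / (2 * x)) with (/ (2*x) * (0 + Hsh x ^ 2 + Hshm 2 x)) by (field; lra).
  apply (is_lim_seq_scal_l _ (/ (2*x)) (Finite (0 + Hsh x ^ 2 + Hshm 2 x))).
  apply is_lim_seq_plus'. apply is_lim_seq_plus'. apply boundary_lim. apply is_lim_seq_const.
  exact Hshm_is.
Qed.

Lemma T_series : is_series (fun i => Hsh (INR (i+1) + x) / (INR (i+1) * (INR (i+1) + x)))
  ((Hsh x ^ 2 + Hshm 2 x) / x).
Proof.
  assert (Hc := fubini Bm cm rm _ Bm_pos row_series col_series r_series).
  assert (X := is_series_plus _ _ _ _ Hc r_series).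
  replace ((Hsh x ^ 2 + Hshm 2 x) / x) with
    (plus ((Hsh x ^ 2 + Hshm 2 x) / (2 * x)) ((Hsh x ^ 2 + Hshm 2 x) / (2 * x))).
  2:{ unfold plus; simpl. field. lra. }
  eapply ext_R; [|exact X]. intros n. unfold plus, cm, rm; simpl.
  assert (hp := INR_pos1 n). field. lra.
Qed.

End Main.

Lemma sum1_shift (f : nat -> R) n : sum1 f (S n) = sum_n (fun m => f (S m)) n.
Proof.
  induction n.
  - rewrite sum_O. simpl. ring.
  - rewrite sum_Sn. change (sum1 f (S (S n))) with (sum1 f (S n) + f (S (S n))).
    rewrite IHn. reflexivity.
Qed.

Theorem mainTheorem6 (k : nat) (a : R) (ha : INR k < a) :
  infinite_sum
    (fun i => Hsh (INR (i + 1) + a) / ((INR (i + 1) + INR k) * (INR (i + 1) + a)))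
    ((Hsh (a - INR k) ^ 2 + Hshm 2 (a - INR k)) / (a - INR k)
     - sum1 (fun j => Hsh (a + INR j - INR k) / (INR j * (a + INR j - INR k))) k).
Proof.
  set (x := a - INR k). assert (hx : 0 < x) by (unfold x; lra).
  assert (T := T_series x hx).
  apply is_series_Reals.
  destruct k as [|k'].
  - simpl sum1. simpl INR in *. unfold x in *. replace (a - 0) with a in * by ring.
    rewrite Rminus_0_r. eapply ext_R; [|exact T].
    intros n. cbv beta. rewrite Rplus_0_r. reflexivity.
  - set (t := fun i => Hsh (INR (i+1) + x) / (INR (i+1) * (INR (i+1) + x))) in T.
    set (f := fun j => Hsh (a + INR j - INR (S k')) / (INR j * (a + INR j - INR (S k')))).
    assert (Ef : sum1 f (S k') = sum_n t k').
    { rewrite sum1_shift. apply sum_n_ext. intros m. unfold f, t, x.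
      replace (a + INR (S m) - INR (S k')) with (INR (m+1) + (a - INR (S k'))).
      2:{ rewrite INR_S1, !S_INR. ring. }
      rewrite INR_S1, !S_INR. reflexivity. }
    rewrite Ef.
    set (L := (Hsh x ^ 2 + Hshm 2 x) / x) in *.
    assert (T2 : is_series t (plus (L - sum_n t k') (sum_n t (Init.Nat.pred (S k'))))).
    { replace (plus (L - sum_n t k') (sum_n t (Init.Nat.pred (S k')))) with L. exact T.
      unfold plus; simpl. ring. }
    assert (T3 := is_series_incr_n t (S k') _ (Nat.lt_0_succ k') T2).
    eapply ext_R; [|exact T3]. intros n. unfold t. cbv beta.
    replace (INR (S k' + n + 1)) with (INR (n+1) + INR (S k')) by (rewrite !plus_INR; ring).
    unfold x. replace (INR (n + 1) + INR (S k') + (a - INR (S k'))) with (INR (n+1) + a) by ring.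
    reflexivity.
Qed.
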